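(* Let $(d_s,d_x)\in\mathcal D_{\mathrm{in}}$. If $\lambda_s^\star=0$, then any $(M,d_s,d_x,\epsilon)$ code must satisfy \[\epsilon\ge\sup_{\gamma\ge0}\Big\{\mathbb P\big[\jmath_X(X,d_s,d_x)-\log M\ge\gamma\big]-\exp(-\gamma)\Big\}.\]
   Context: Let $\mathcal S,\mathcal X,\widehat{\mathcal S},\widehat{\mathcal X}$ be finite sets, $P_{SX}$ a distribution on $\mathcal S\times\mathcal X$, and $\mathsf d_s:\mathcal S\times\widehat{\mathcal S}\to[0,\infty)$, $\mathsf d_x:\mathcal X\times\widehat{\mathcal X}\to[0,\infty)$ distortion measures. An $(M,d_s,d_x,\epsilon)$ code is a random encoder $P_{U|X}:\mathcal X\to\{1,\dots,M\}$ and a random decoder $P_{ZY|U}:\{1,\dots,M\}\to\widehat{\mathcal S}\times\widehat{\mathcal X}$ (so $S-X-U-(Z,Y)$) with $\mathbb P[\mathsf d_s(S,Z)>d_s\text{ or }\mathsf d_x(X,Y)>d_x]\le\epsilon$. $\bar{\mathsf d}_s(x,z)=\mathbb E[\mathsf d_s(S,z)\mid X=x]$; $R_{S,X}(d_s,d_x)=\min_{P_{ZY|X}}I(X;Z,Y)$ subject to $\mathbb E[\bar{\mathsf d}_s(X,Z)]\le d_s$, $\mathbb E[\mathsf d_x(X,Y)]\le d_x$, with minimizer set $\mathcal P^\star(d_s,d_x)$. With $\mathcal D_{\mathrm{adm}}=\{d_s\ge\mathbb E[\min_z\bar{\mathsf d}_s(X,z)],\,d_x\ge\mathbb E[\min_y\mathsf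 d_x(X,y)]\}$, partition it into $\mathcal D_{sx}$ (every minimizer tight in both constraints), $\mathcal D_{\bar sx}$ (some minimizer strict in $s$, every minimizer tight in $x$), $\mathcal D_{s\bar x}$ (every minimizer tight in $s$, some strict in $x$), $\mathcal D_{\bar s\bar x}$ (some minimizer strict in $s$, some strict in $x$); $\mathcal D_{\mathrm{in}}$ is the union of their interiors, on which $R_{S,X}$ is differentiable; $\lambda_s^\star=-\partial R_{S,X}/\partial d_s$, $\lambda_x^\star=-\partial R_{S,X}/\partial d_x$. Fix $P_{Z^\star Y^\star|X}\in\mathcal P^\star(d_s,d_x)$ with output marginal $P_{Z^\star Y^\star}$, and $\jmath_X(x,d_s,d_x)=-\log\mathbb E[\exp\{\lambda_s^\star d_s+\lambda_x^\star d_x-\lambda_s^\star\bar{\mathsf d}_s(x,Z^\star)-\lambda_x^\star\mathsf d_x(x,Y^\star)\}]$ with expectation over $P_{Z^\star Y^\star}$; $X\sim P_X$. $\log$, $\exp$ to a common base. *)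

(* Defs.v *)
From HB Require Import structures.
From mathcomp Require Import all_boot all_order all_algebra.
From mathcomp Require Import all_classical all_reals all_analysis.
Set Implicit Arguments. Unset Strict Implicit. Unset Printing Implicit Defensive.
Import Order.TTheory GRing.Theory Num.Theory.
Import numFieldNormedType.Exports.
Local Open Scope classical_set_scope.
Local Open Scope ring_scope.

Section JointSourceCoding.
Variable R : realType.

Definition logb (b x : R) : R := ln x / ln b.
Definition expb (b x : R) : R := powR b x.

Definition is_dist (T : finType) (p : T -> R) : Prop :=
  (forall t, 0 <= p t) /\ \sum_(t : T) p t = 1.

Definition is_kernel (A B : finType) (k : A -> B -> R) : Prop :=
  forall a, is_dist (k a).

Variables (S X Sh Xh : finType).
Variable b : R.
Variable P : S * X -> R.
Variable dS : S -> Sh -> R.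
Variable dX : X -> Xh -> R.

Definition PX (x : X) : R := \sum_(s : S) P (s, x).

(* \bar d_s(x,z) = E[d_s(S,z) | X = x]  (set to 0 when P_X(x) = 0) *)
Definition dSbar (x : X) (z : Sh) : R :=
  (\sum_(s : S) P (s, x) * dS s z) / PX x.

(* output marginal of a test channel K = P_{ZY|X} *)
Definition outmarg (K : X -> Sh * Xh -> R) (w : Sh * Xh) : R :=
  \sum_(x : X) PX x * K x w.

(* mutual information I(X; Z,Y) in base b, with 0 log 0 = 0 *)
Definition MI (K : X -> Sh * Xh -> R) : R :=
  \sum_(x : X) \sum_(w : Sh * Xh)
    (if PX x * K x w == 0 then 0
     else PX x * K x w * logb b (K x w / outmarg K w)).

Definition EdS (K : X -> Sh * Xh -> R) : R :=
  \sum_(x : X) \sum_(w : Sh * Xh) PX x * K x w * dSbar x w.1.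
Definition EdX (K : X -> Sh * Xh -> R) : R :=
  \sum_(x : X) \sum_(w : Sh * Xh) PX x * K x w * dX x w.2.

Definition feasible (ds dx : R) (K : X -> Sh * Xh -> R) : Prop :=
  is_kernel K /\ EdS K <= ds /\ EdX K <= dx.

(* R_{S,X}(d_s,d_x) : the minimum (= infimum, attained) of I(X;Z,Y) *)
Definition RSX (ds dx : R) : R :=
  inf [set MI K | K in feasible ds dx].

Definition minimizer (ds dx : R) (K : X -> Sh * Xh -> R) : Prop :=
  feasible ds dx K /\ MI K = RSX ds dx.

Definition Dadm (d : (R * R)%type) : Prop :=
  \sum_(x : X) PX x * inf (range (dSbar x)) <= d.1
  /\ \sum_(x : X) PX x * inf (range (dX x)) <= d.2.

Definition D_sx (d : (R * R)%type) : Prop := Dadm d /\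
  (forall K, minimizer d.1 d.2 K -> EdS K = d.1 /\ EdX K = d.2).
Definition D_sbarx (d : (R * R)%type) : Prop := [/\ Dadm d,
  (exists K, minimizer d.1 d.2 K /\ EdS K < d.1) &
  (forall K, minimizer d.1 d.2 K -> EdX K = d.2)].
Definition D_sxbar (d : (R * R)%type) : Prop := [/\ Dadm d,
  (forall K, minimizer d.1 d.2 K -> EdS K = d.1) &
  (exists K, minimizer d.1 d.2 K /\ EdX K < d.2)].
Definition D_sbarxbar (d : (R * R)%type) : Prop := [/\ Dadm d,
  (exists K, minimizer d.1 d.2 K /\ EdS K < d.1) &
  (exists K, minimizer d.1 d.2 K /\ EdX K < d.2)].

Definition Din (d : (R * R)%type) : Prop :=
  (D_sx)° d \/ (D_sbarx)° d \/ (D_sxbar)° d \/ (D_sbarxbar)° d.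

Definition lambda_s (ds dx : R) : R := - derive1 (fun t => RSX t dx) ds.
Definition lambda_x (ds dx : R) : R := - derive1 (fun t => RSX ds t) dx.

Definition jX (K : X -> Sh * Xh -> R) (ds dx : R) (x : X) : R :=
  - logb b (\sum_(w : Sh * Xh) outmarg K w *
      expb b (lambda_s ds dx * ds + lambda_x ds dx * dx
              - lambda_s ds dx * dSbar x w.1 - lambda_x ds dx * dX x w.2)).

(* (M, d_s, d_x, eps) code: random encoder E = P_{U|X}, random decoder
   D = P_{ZY|U}, with S - X - U - (Z,Y) *)
Definition excess_prob (M : nat) (E : X -> 'I_M -> R) (D : 'I_M -> Sh * Xh -> R)
  (ds dx : R) : R :=
  \sum_(s : S) \sum_(x : X) \sum_(u : 'I_M) \sum_(w : Sh * Xh)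
    P (s, x) * E x u * D u w *
    (if (dS s w.1 > ds) || (dX x w.2 > dx) then 1 else 0).

Definition is_code (M : nat) (E : X -> 'I_M -> R) (D : 'I_M -> Sh * Xh -> R)
  (ds dx eps : R) : Prop :=
  is_kernel E /\ is_kernel D /\ excess_prob E D ds dx <= eps.

Definition tail_prob (K : X -> Sh * Xh -> R) (ds dx : R) (M : nat) (gamma : R) : R :=
  \sum_(x : X) PX x * (if jX K ds dx x - logb b M%:R >= gamma then 1 else 0).

End JointSourceCoding.

(* Main.v *)
Require Import Defs.
From HB Require Import structures.
From mathcomp Require Import all_boot all_order all_algebra.
From mathcomp Require Import all_classical all_reals all_analysis.
Set Implicit Arguments. Unset Strict Implicit. Unset Printing Implicit Defensive.
Import Order.TTheory GRing.Theory Num.Theory.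
Import numFieldNormedType.Exports.
Local Open Scope classical_set_scope.
From mathcomp Require Import ring lra.
Local Open Scope ring_scope.
Lemma int_ball (R : realType) (A : set (R * R)%type) (d : (R*R)%type) :
  A° d -> exists2 e : R, 0 < e & forall p : (R*R)%type, `|p.1 - d.1| < e -> `|p.2 - d.2| < e -> A p.
Proof.
rewrite /interior => /nbhs_ballP [e e0 H]. exists e => // p h1 h2. apply: H.
split => /=; rewrite /ball /= distrC //.
Qed.

Lemma near0' (R : realType) (P : R -> Prop) : (\forall t \near 0^', P t) ->
  exists2 e : R, 0 < e & forall t, t != 0 -> `|t| < e -> P t.
Proof.
rewrite /within => /nbhs_ballP [e e0 H]. exists e => // t t0 te. apply: H => //.
by rewrite /ball /= sub0r normrN.
Qed.
Section Gen.
Variable R : realType.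
Implicit Types a c q u : R.

Lemma lnle u : 0 < u -> ln u <= u - 1.
Proof.
move=> u0; have := @le_ln1Dx R (u - 1); rewrite (addrC 1) subrK; apply.
by rewrite ltrBrDl subrr.
Qed.

Lemma lnlt u : 0 < u -> u != 1 -> ln u < u - 1.
Proof.
move=> u0 u1; have h : ln u != 0 by rewrite ln_eq0.
have := expR_gt1Dx h; rewrite lnK ?posrE // => hh.
lra.
Qed.

Definition xl a c := a * ln (a / c).

Lemma xl0c c : xl 0 c = 0.
Proof. by rewrite /xl mul0r. Qed.

Lemma gibbs_term c q : 0 <= c -> 0 <= q -> (0 < c -> 0 < q) -> c - q <= xl c q.
Proof.
move=> c0 q0 cq; rewrite /xl; have [->|cpos] := eqVneq c 0.
  by rewrite mul0r sub0r oppr_le0.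
have cp : 0 < c by rewrite lt0r cpos.
have qp := cq cp.
have -> : ln (c / q) = - ln (q / c).
  by rewrite -lnV ?posrE ?divr_gt0 // invf_div.
have := lnle (divr_gt0 qp cp) => h.
rewrite mulrN -lerNr opprB.
rewrite (le_trans (ler_wpM2l (ltW cp) h)) //.
by rewrite mulrBr mulr1 mulrCA divff ?mulr1 // gt_eqF.
Qed.

Lemma gibbs_eq c q : 0 <= c -> 0 <= q -> (0 < c -> 0 < q) -> xl c q = c - q -> c = q.
Proof.
move=> c0 q0 cq; rewrite /xl; have [->|cpos] := eqVneq c 0.
  by rewrite mul0r sub0r => /eqP; rewrite eq_sym oppr_eq0 => /eqP ->.
have cp : 0 < c by rewrite lt0r cpos.
have qp := cq cp.
have [//|qc] := eqVneq c q.
have -> : ln (c / q) = - ln (q / c).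
  by rewrite -lnV ?posrE ?divr_gt0 // invf_div.
have h : q / c != 1.
  by apply: contra qc => /eqP /divr1_eq ->.
have := lnlt (divr_gt0 qp cp) h => h2.
have h3 : c * ln (q / c) < c * (q / c - 1) by rewrite ltr_pM2l.
move=> e; move: h3; rewrite mulrBr mulr1 mulrCA divff ?mulr1 ?gt_eqF //.
have -> : c * ln (q / c) = q - c by apply: oppr_inj; rewrite -mulrN e opprB.
by rewrite ltxx.
Qed.

Lemma xl_scale t a c : 0 < t -> xl (t * a) (t * c) = t * xl a c.
Proof.
move=> t0; rewrite /xl -mulrA; congr (_ * (_ * ln _)).
by rewrite invfM mulrACA divff ?gt_eqF // mul1r.
Qed.

Lemma logsum2 a1 a2 c1 c2 : 0 <= a1 -> 0 <= a2 -> 0 <= c1 -> 0 <= c2 ->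
  (0 < a1 -> 0 < c1) -> (0 < a2 -> 0 < c2) ->
  xl (a1 + a2) (c1 + c2) <= xl a1 c1 + xl a2 c2.
Proof.
move=> a10 a20 c10 c20 h1 h2.
have [A0|Apos] := eqVneq (a1 + a2) 0.
  have /andP[/eqP e1 /eqP e2] : (a1 == 0) && (a2 == 0) by rewrite -paddr_eq0 // A0.
  by rewrite e1 e2 addr0 !xl0c addr0.
have Ap : 0 < a1 + a2 by rewrite lt0r Apos addr_ge0.
have Cp : 0 < c1 + c2.
  have [a1p|] := ltP 0 a1; first by rewrite (lt_le_trans (h1 a1p)) // lerDl.
  rewrite le_eqVlt => /orP[/eqP e|]; last by rewrite ltNge a10.
  have a2p : 0 < a2 by move: Ap; rewrite e add0r.
  by rewrite (lt_le_trans (h2 a2p)) // lerDr.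
set A := a1 + a2; set C := c1 + c2.
have key : forall a c, 0 <= a -> 0 <= c -> (0 < a -> 0 < c) ->
    a - c * (A / C) <= xl a c - a * ln (A / C).
  move=> a c a0 c0 hac.
  have [->|ap] := eqVneq a 0; first by rewrite xl0c !mul0r sub0r subr0 oppr_le0 mulr_ge0 // divr_ge0 // ltW.
  have app : 0 < a by rewrite lt0r ap.
  have cp := hac app.
  have -> : xl a c - a * ln (A / C) = xl a (c * (A / C)).
    rewrite /xl -mulrBr; congr (_ * _).
    rewrite -ln_div ?posrE ?divr_gt0 //; congr ln.
    by rewrite (invfM c) mulrA.
  apply: gibbs_term => //; first by rewrite mulr_ge0 // divr_ge0 // ltW.
  by move=> _; rewrite mulr_gt0 // divr_gt0.
have k1 := key _ _ a10 c10 h1.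
have k2 := key _ _ a20 c20 h2.
have := lerD k1 k2.
have -> : a1 - c1 * (A / C) + (a2 - c2 * (A / C)) = 0.
  rewrite addrACA -opprD -mulrDl -/A -/C mulrCA divff ?gt_eqF // mulr1 subrr //.
rewrite addrACA -opprD -mulrDl -/A subr_ge0.
by rewrite /xl.
Qed.

Lemma xl_convex t a1 a2 c1 c2 : 0 <= t <= 1 -> 0 <= a1 -> 0 <= a2 -> 0 <= c1 -> 0 <= c2 ->
  (0 < a1 -> 0 < c1) -> (0 < a2 -> 0 < c2) ->
  xl ((1 - t) * a1 + t * a2) ((1 - t) * c1 + t * c2) <= (1 - t) * xl a1 c1 + t * xl a2 c2.
Proof.
move=> /andP[t0 t1] a10 a20 c10 c20 h1 h2.
have sc : forall s a c, 0 <= s -> xl (s * a) (s * c) = s * xl a c.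
  move=> s a c; rewrite le_eqVlt => /orP[/eqP <-|sp]; first by rewrite !mul0r xl0c.
  exact: xl_scale.
rewrite -(sc (1 - t)) ?subr_ge0 // -(sc t) //.
have hh : forall s a c, 0 <= s -> 0 <= a -> (0 < a -> 0 < c) -> 0 < s * a -> 0 < s * c.
  move=> s a c s0 a0 hac; rewrite le_eqVlt in s0; case/orP: s0 => [/eqP <-|sp]; first by rewrite mul0r ltxx.
  by rewrite !pmulr_rgt0 //; apply: hac.
apply: logsum2; rewrite ?mulr_ge0 ?subr_ge0 //; apply: hh; rewrite ?subr_ge0 //.
Qed.

End Gen.
Section Gen2.
Variable R : realType.

Lemma xl_tilt (a c e N : R) : 0 <= a -> (0 < a -> 0 < c) -> 0 < e -> 0 < N ->
  xl a c - a * ln e + a * ln N = xl a (c * e / N).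
Proof.
move=> a0 hac e0 N0; rewrite /xl; have [->|ap] := eqVneq a 0; first by rewrite !mul0r subrr addr0.
have app : 0 < a by rewrite lt0r ap.
have c0 := hac app.
rewrite -mulrBr -mulrDr; congr (_ * _).
have -> : a / (c * e / N) = a / c / e * N.
  by rewrite invfM invrK mulrA invfM mulrA.
have h1 : ln (a / c / e * N) = ln (a / c / e) + ln N by rewrite lnM // posrE ?divr_gt0.
have h2 : ln (a / c / e) = ln (a / c) - ln e by rewrite ln_div // posrE ?divr_gt0.
by rewrite h1 h2.
Qed.

Lemma xl_diff (a c1 c2 : R) : 0 <= a -> (0 < a -> 0 < c1) -> (0 < a -> 0 < c2) ->
  xl a c1 - xl a c2 = a * ln (c2 / c1).
Proof.
move=> a0 h1 h2; rewrite /xl; have [->|ap] := eqVneq a 0; first by rewrite !mul0r subrr.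
have app : 0 < a by rewrite lt0r ap.
have c1p := h1 app; have c2p := h2 app.
rewrite -mulrBr; congr (_ * _).
rewrite !ln_div ?posrE ?divr_gt0 //; lra.
Qed.

Lemma gen_bound (N e0 t : R) : 0 < N -> 0 < e0 -> 0 < t -> t < 1 ->
  (e0 - N) / N <= (e0 - N) / ((1 - t) * N + t * e0) + t / (1 - t) * ((e0 - N) / N) ^+ 2.
Proof.
move=> N0 e00 t0 t1.
have t1p : 0 < 1 - t by rewrite subr_gt0.
have M0 : 0 < (1 - t) * N + t * e0 by rewrite addr_gt0 ?mulr_gt0.
set M := (1 - t) * N + t * e0.
have hM : (1 - t) * N <= M by rewrite /M lerDl mulr_ge0 // ltW.
have e : (e0 - N) / N - (e0 - N) / M = t * (e0 - N) ^+ 2 / (N * M).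
  rewrite /M; field; apply/andP; split; rewrite gt_eqF //.
have r : t / (1 - t) * ((e0 - N) / N) ^+ 2 = (t * (e0 - N) ^+ 2) * ((1 - t) * N * N)^-1.
  by field; rewrite ?gt_eqF.
have h : t * (e0 - N) ^+ 2 / (N * M) <= t / (1 - t) * ((e0 - N) / N) ^+ 2.
  rewrite r; apply: ler_wpM2l; first by apply: mulr_ge0; [exact: ltW|exact: sqr_ge0].
  rewrite lef_pV2 ?posrE; last 2 first.
  - by apply: mulr_gt0.
  - by apply: mulr_gt0 => //; apply: mulr_gt0.
  by rewrite [X in X <= _]mulrC; apply: ler_wpM2l; [exact: ltW|exact: hM].
move: e h; set u := (e0 - N) / N; set v := (e0 - N) / M; set w := t / (1 - t) * u ^+ 2.
move=> e h; lra.
Qed.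

Lemma small_pos (s C : R) : 0 <= C -> (forall t, 0 < t -> t < 1 -> s <= t / (1 - t) * C) -> s <= 0.
Proof.
move=> C0 h; rewrite leNgt; apply/negP => s0.
have C1 : 0 < C + 1 by rewrite ltr_wpDl.
pose t := s / (s + C + 1).
have sC : 0 < s + C + 1 by rewrite -addrA addr_gt0.
have t0 : 0 < t by rewrite divr_gt0.
have t1 : t < 1 by rewrite ltr_pdivrMr // mul1r -addrA ltrDl.
have := h t t0 t1.
have -> : t / (1 - t) = s / (C + 1).
  by rewrite /t; field; rewrite !gt_eqF.
move=> hh; have : s / (C + 1) * C < s.
  rewrite -mulrA [_^-1 * C]mulrC gtr_pMr // ltr_pdivrMr // mul1r ltrDl ltr01 //.
by rewrite ltNge hh.
Qed.
End Gen2.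
Section Slopes.
Variable R : realType.
Variables (g : R -> R) (r : R).
Hypothesis r0 : 0 < r.
Hypothesis conv : forall u v l, -r < u < r -> -r < v < r -> 0 <= l <= 1 ->
  g (l * u + (1 - l) * v) <= l * g u + (1 - l) * g v.

Lemma chord u v w : -r < u < r -> -r < w < r -> u < v -> v < w ->
  (g v - g u) * (w - u) <= (g w - g u) * (v - u).
Proof.
move=> hu hw uv vw.
have wu : 0 < w - u by rewrite subr_gt0 (lt_trans uv vw).
pose l := (v - u) / (w - u).
have l0 : 0 <= l by rewrite divr_ge0 ?(ltW wu) // subr_ge0 ltW.
have l1 : l <= 1 by rewrite ler_pdivrMr // mul1r lerD2r ltW.
have ev : v = l * w + (1 - l) * u by rewrite /l; field; rewrite gt_eqF.
have hl : 0 <= l <= 1 by rewrite l0 l1.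
have h := conv hw hu hl; rewrite -ev in h.
have : g v - g u <= l * (g w - g u) by lra.
rewrite /l => h2.
have := ler_wpM2r (ltW wu) h2.
rewrite [X in _ <= X -> _](_ : _ = (g w - g u) * (v - u)) //.
by field; rewrite gt_eqF.
Qed.

Definition qq h := (g h - g 0) / h.

Lemma qq_mono h1 h2 : -r < h1 < r -> -r < h2 < r -> h1 != 0 -> h2 != 0 -> h1 < h2 -> qq h1 <= qq h2.
Proof.
move=> hr1 hr2 n1 n2 lt12.
have h0r : -r < 0 < r by rewrite oppr_lt0 r0.
rewrite /qq.
have [p1|m1] := ltP 0 h1.
  have p2 : 0 < h2 := lt_trans p1 lt12.
  have := chord h0r hr2 p1 lt12; rewrite !subr0 => h.
  rewrite ler_pdivrMr // mulrAC ler_pdivlMr //; lra.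
have m1' : h1 < 0 by rewrite lt_neqAle n1 m1.
have [p2|m2] := ltP 0 h2.
  have := chord hr1 hr2 m1' p2 => h.
  have e : (g h1 - g 0) / h1 - (g h2 - g 0) / h2 = ((g h1 - g 0) * h2 - (g h2 - g 0) * h1) / (h1 * h2).
    by field; rewrite n1 n2.
  rewrite -subr_le0 e; apply: mulr_ge0_le0; last by rewrite invr_le0 nmulr_rle0 // ltW.
  move: h; rewrite !sub0r; lra.
have m2' : h2 < 0 by rewrite lt_neqAle n2 m2.
have := chord hr1 h0r lt12 m2' => h.
have e : (g h1 - g 0) / h1 - (g h2 - g 0) / h2 = ((g h1 - g 0) * h2 - (g h2 - g 0) * h1) / (h1 * h2).
  by field; rewrite n1 n2.
rewrite -subr_le0 e; apply: mulr_le0_ge0; last by rewrite invr_ge0 nmulr_rge0 // ltW.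
move: h; rewrite !sub0r; lra.
Qed.

Hypothesis mono : forall h, 0 < h < r -> g h <= g 0.

Lemma slope_ab : exists al be : R, [/\ al <= be, be <= 0,
  (forall h, 0 < h < r -> be * h <= g h - g 0),
  (forall h, -r < h < 0 -> al * h <= g h - g 0) &
  (al = be -> qq x @[x --> 0^'] --> al)].
Proof.
pose Sn := [set qq h | h in [set h | -r < h < 0]].
pose Sp := [set qq h | h in [set h | 0 < h < r]].
have r2 : 0 < r / 2 by rewrite divr_gt0.
have r2r : r / 2 < r by rewrite ltr_pdivrMr // ltr_pMr // ltr1n.
have hp2 : 0 < r / 2 < r by rewrite r2 r2r.
have hm2 : - r < - (r / 2) < 0 by rewrite ltrN2 r2r oppr_lt0 r2.
have inr : forall h, 0 < h < r -> -r < h < r.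
  by move=> h /andP[h0 hr]; rewrite hr andbT (lt_trans _ h0) // oppr_lt0.
have inr' : forall h, -r < h < 0 -> -r < h < r.
  by move=> h /andP[h0 hr]; rewrite h0 (lt_trans hr r0).
have neg_le_pos : forall h1 h2, -r < h1 < 0 -> 0 < h2 < r -> qq h1 <= qq h2.
  move=> h1 h2 a1 a2; have i1 := inr' _ a1; have i2 := inr _ a2.
  case/andP: a1 => _ a10; case/andP: a2 => a20 _.
  apply: qq_mono => //; [by rewrite lt_eqF|by rewrite gt_eqF|exact: lt_trans a10 a20].
have Sn0 : Sn !=set0 by exists (qq (- (r / 2))); exists (- (r / 2)).
have Sp0 : Sp !=set0 by exists (qq (r / 2)); exists (r / 2).
have Snub : has_ubound Sn by exists (qq (r / 2)) => _ [h hh <-]; apply: neg_le_pos.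
have Splb : has_lbound Sp by exists (qq (- (r / 2))) => _ [h hh <-]; apply: neg_le_pos.
have ub : forall h, -r < h < 0 -> qq h <= sup Sn.
  by move=> h hh; apply: ub_le_sup => //; exists h.
have lb : forall h, 0 < h < r -> inf Sp <= qq h.
  by move=> h hh; apply: ge_inf => //; exists h.
have ab : sup Sn <= inf Sp.
  apply: lb_le_inf => // _ [h2 hh2 <-]; apply: ge_sup => // _ [h1 hh1 <-].
  exact: neg_le_pos.
exists (sup Sn), (inf Sp); split => //.
- apply: (le_trans (lb _ hp2)); rewrite /qq pmulr_lle0 ?invr_gt0 // subr_le0.
  exact: mono.
- move=> h hh; have := lb _ hh; rewrite /qq ler_pdivlMr //; last by case/andP: hh.
- move=> h hh; have := ub _ hh; rewrite /qq ler_ndivrMr //; last by case/andP: hh.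
move=> eab; apply/cvgrPdist_lt => eps e0.
have [_ [h1 hh1 <-] a1] := sup_adherent e0 (conj Sn0 Snub).
have [_ [h2 hh2 <-] a2] := inf_adherent e0 (conj Sp0 Splb).
case/andP: hh1 => h1r h10; case/andP: hh2 => h20 h2r.
rewrite /within; apply/nbhs_ballP; exists (Num.min (- h1) h2).
  by rewrite /= lt_min oppr_gt0 h10 h20.
move=> t; rewrite /ball /= sub0r normrN lt_min => /andP[t1 t2] tn0.
have [tn|tp] := ltP t 0.
  have t1' : h1 < t by move: t1; rewrite ltr0_norm // ltrN2.
  have ht : -r < t < 0 by rewrite tn andbT (lt_trans h1r t1').
  have := ub _ ht; have : qq h1 <= qq t.
    by apply: qq_mono => //; [apply: inr'; rewrite h1r h10|exact: inr'|rewrite lt_eqF].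
  move=> hh1 hh2; rewrite ger0_norm; last by rewrite subr_ge0.
  lra.
have tp' : 0 < t by rewrite lt_neqAle eq_sym tn0 tp.
have t2' : t < h2 by move: t2; rewrite gtr0_norm.
have ht : 0 < t < r by rewrite tp' (lt_trans t2' h2r).
have := lb _ ht; have : qq t <= qq h2.
  apply: qq_mono => //; try by [exact: inr|apply: inr; rewrite h20 h2r|rewrite gt_eqF].
move=> hh1 hh2; rewrite eab ler0_norm; last by rewrite subr_le0.
lra.
Qed.
End Slopes.
Section Main.
Variable R : realType.
Variables (S X Sh Xh : finType).
Variable b : R.
Variable P : S * X -> R.
Variable dS : S -> Sh -> R.
Variable dX : X -> Xh -> R.
Hypothesis hb : 1 < b.
Hypothesis hP : is_dist P.

Local Notation W := (Sh * Xh)%type.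
Local Notation PX := (PX P).
Local Notation om := (@outmarg R S X Sh Xh P).

Lemma lnb_gt0 : 0 < ln b.
Proof. exact: ln_gt0. Qed.

Lemma PX_ge0 x : 0 <= PX x.
Proof. by rewrite /Defs.PX sumr_ge0 // => s _; case: hP. Qed.

Lemma PX_sum : \sum_x PX x = 1.
Proof.
case: hP => _ <-; rewrite /Defs.PX exchange_big /=.
by rewrite pair_big /=; apply: eq_bigr => -[s x].
Qed.

Lemma ker_ge0 (A B : finType) (k : A -> B -> R) : is_kernel k -> forall a c, 0 <= k a c.
Proof. by move=> h a c; case: (h a). Qed.

Lemma ker_sum (A B : finType) (k : A -> B -> R) : is_kernel k -> forall a, \sum_c k a c = 1.
Proof. by move=> h a; case: (h a). Qed.

Lemma ker_le1 (A B : finType) (k : A -> B -> R) : is_kernel k -> forall a c, k a c <= 1.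
Proof.
move=> h a c; rewrite -(ker_sum h a) (bigD1 c) //= lerDl sumr_ge0 // => i _.
exact: ker_ge0.
Qed.

Lemma om_ge0 K : is_kernel K -> forall w, 0 <= om K w.
Proof. by move=> hK w; rewrite sumr_ge0 // => x _; rewrite mulr_ge0 ?PX_ge0 ?(ker_ge0 hK). Qed.

Lemma om_sum K : is_kernel K -> \sum_w om K w = 1.
Proof.
move=> hK; rewrite /outmarg exchange_big /= -PX_sum; apply: eq_bigr => x _.
by rewrite -mulr_sumr (ker_sum hK) mulr1.
Qed.

Lemma om_ge K : is_kernel K -> forall x w, PX x * K x w <= om K w.
Proof.
move=> hK x w; rewrite /outmarg (bigD1 x) //= lerDl sumr_ge0 // => i _.
by rewrite mulr_ge0 ?PX_ge0 ?(ker_ge0 hK).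
Qed.

Lemma om_pos K : is_kernel K -> forall x w, 0 < PX x * K x w -> 0 < om K w.
Proof. by move=> hK x w h; apply: lt_le_trans h (om_ge hK x w). Qed.

Definition MIn K := \sum_x \sum_w xl (PX x * K x w) (PX x * om K w).

Lemma MI_eq K : MI b P K = MIn K / ln b.
Proof.
rewrite /MI /MIn mulr_suml; apply: eq_bigr => x _; rewrite mulr_suml; apply: eq_bigr => w _.
case: eqP => [->|h]; first by rewrite xl0c mul0r.
rewrite /xl /logb mulrA; congr (_ * ln _ / _).
have hx : PX x != 0 by apply/eqP => e; apply: h; rewrite e mul0r.
by rewrite invfM mulrACA divff // mul1r.
Qed.

Lemma pos_PX (K : X -> W -> R) x w : 0 < PX x * K x w -> 0 < PX x.
Proof.
move=> h; rewrite lt0r PX_ge0 andbT; apply/eqP => e; move: h; by rewrite e mul0r ltxx.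
Qed.

Lemma pos_omP K : is_kernel K -> forall x w, 0 < PX x * K x w -> 0 < PX x * om K w.
Proof. by move=> hK x w h; rewrite mulr_gt0 ?(pos_PX h) ?(om_pos hK h). Qed.

Lemma sum_PXK (f : X -> W -> R) : (forall x, \sum_w f x w = 1) -> \sum_x \sum_w PX x * f x w = 1.
Proof. by move=> h; rewrite -PX_sum; apply: eq_bigr => x _; rewrite -mulr_sumr h mulr1. Qed.

Lemma MIn_ge0 K : is_kernel K -> 0 <= MIn K.
Proof.
move=> hK; have : \sum_x \sum_w (PX x * K x w - PX x * om K w) <= MIn K.
  apply: ler_sum => x _; apply: ler_sum => w _; apply: gibbs_term.
  - by rewrite mulr_ge0 ?PX_ge0 ?(ker_ge0 hK).
  - by rewrite mulr_ge0 ?PX_ge0 ?(om_ge0 hK).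
  exact: pos_omP.
apply: le_trans; rewrite le_eqVlt; apply/orP; left; apply/eqP.
rewrite big1 // => x _.
by rewrite sumrB -!mulr_sumr (ker_sum hK) om_sum // subrr.
Qed.

Definition Lag (e : X -> W -> R) (K : X -> W -> R) :=
  MIn K - \sum_x \sum_w PX x * K x w * ln (e x w).
Definition Nf (e : X -> W -> R) (Q : W -> R) x := \sum_w Q w * e x w.
Definition G (e : X -> W -> R) (Q : W -> R) := - \sum_x PX x * ln (Nf e Q x).
Definition tilt (e : X -> W -> R) (Q : W -> R) := fun x w => Q w * e x w / Nf e Q x.

Definition isdist (Q : W -> R) := (forall w, 0 <= Q w) /\ \sum_w Q w = 1.

Lemma Nf_pos e Q : (forall x w, 0 < e x w) -> isdist Q -> forall x, 0 < Nf e Q x.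
Proof.
move=> he [Q0 Q1] x; rewrite lt0r sumr_ge0 ?andbT; last by move=> w _; rewrite mulr_ge0 // ltW.
apply/eqP => /eqP; rewrite psumr_eq0; last by move=> w _; rewrite mulr_ge0 // ltW.
move/allP => h; have : \sum_w Q w = 0.
  rewrite big1 // => w _; have := h w (mem_index_enum w).
  by rewrite mulf_eq0 (gt_eqF (he x w)) orbF => /eqP.
by rewrite Q1 => /eqP; rewrite oner_eq0.
Qed.

Lemma tilt_ker e Q : (forall x w, 0 < e x w) -> isdist Q -> is_kernel (tilt e Q).
Proof.
move=> he hQ x; have N0 := Nf_pos he hQ x; split.
  by move=> w; rewrite /tilt divr_ge0 ?mulr_ge0 ?(ltW (he x w)) ?(ltW N0) //; case: hQ.
by rewrite /tilt -mulr_suml divff // gt_eqF.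
Qed.

Lemma om_dist K : is_kernel K -> isdist (om K).
Proof. by move=> hK; split; [exact: om_ge0|exact: om_sum]. Qed.

Lemma lag_decomp e K : (forall x w, 0 < e x w) -> is_kernel K ->
  Lag e K = G e (om K) + \sum_x \sum_w
     (xl (PX x * K x w) (PX x * tilt e (om K) x w)
       - (PX x * K x w - PX x * tilt e (om K) x w)).
Proof.
move=> he hK.
have hN := Nf_pos he (om_dist hK).
have E1 : Lag e K + \sum_x PX x * ln (Nf e (om K) x) =
    \sum_x \sum_w xl (PX x * K x w) (PX x * tilt e (om K) x w).
  rewrite /Lag /MIn -sumrB -big_split /=; apply: eq_bigr => x _.
  have -> : PX x * ln (Nf e (om K) x) = \sum_w PX x * K x w * ln (Nf e (om K) x).
    by rewrite -mulr_suml -mulr_sumr (ker_sum hK) mulr1.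
  rewrite -sumrB -big_split /=; apply: eq_bigr => w _.
  rewrite xl_tilt //; first by rewrite /tilt !mulrA.
  - by rewrite mulr_ge0 ?PX_ge0 ?(ker_ge0 hK).
  - exact: pos_omP.
have E2 : \sum_x \sum_w (PX x * K x w - PX x * tilt e (om K) x w) = 0.
  rewrite big1 // => x _; rewrite sumrB -!mulr_sumr (ker_sum hK).
  by rewrite (ker_sum (tilt_ker he (om_dist hK))) subrr.
have E3 : \sum_x \sum_w (xl (PX x * K x w) (PX x * tilt e (om K) x w)
       - (PX x * K x w - PX x * tilt e (om K) x w)) =
   \sum_x \sum_w xl (PX x * K x w) (PX x * tilt e (om K) x w) -
   \sum_x \sum_w (PX x * K x w - PX x * tilt e (om K) x w).
  by rewrite -sumrB; apply: eq_bigr => x _; rewrite sumrB.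
rewrite E3 E2 subr0 -E1 /G; ring.
Qed.
Lemma xl_self (a : R) : xl a a = 0.
Proof.
rewrite /xl; have [->|a0] := eqVneq a 0; first by rewrite mul0r.
by rewrite divff // ln1 mulr0.
Qed.

Lemma lag_tilt e Q : (forall x w, 0 < e x w) -> isdist Q -> Lag e (tilt e Q) <= G e Q.
Proof.
move=> he hQ; set T := tilt e Q.
have hT : is_kernel T := tilt_ker he hQ.
have hN := Nf_pos he hQ.
case: (hQ) => Q0 Q1.
have QT : forall x w, 0 < PX x * T x w -> 0 < Q w.
  move=> x w h; rewrite lt0r Q0 andbT; apply/eqP => q0; move: h.
  by rewrite /T /tilt q0 !mul0r mulr0 ltxx.
have a0 : forall x w, 0 <= PX x * T x w by move=> x w; rewrite mulr_ge0 ?PX_ge0 ?(ker_ge0 hT).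
have F1 : \sum_x \sum_w xl (PX x * T x w) (PX x * Q w) - MIn T = \sum_w xl (om T w) (Q w).
  rewrite /MIn -sumrB.
  have -> : \sum_x (\sum_w xl (PX x * T x w) (PX x * Q w) - \sum_w xl (PX x * T x w) (PX x * om T w))
     = \sum_x \sum_w (PX x * T x w) * ln (om T w / Q w).
    apply: eq_bigr => x _; rewrite -sumrB; apply: eq_bigr => w _.
    rewrite xl_diff //; first last.
    - exact: pos_omP.
    - by move=> h; rewrite mulr_gt0 ?(pos_PX h) ?(QT x w h).
    have [->|h] := eqVneq (PX x * T x w) 0; first by rewrite !mul0r.
    have px : PX x != 0 by apply: contra h => /eqP ->; rewrite mul0r.
    by rewrite invfM mulrACA divff // mul1r.
  rewrite exchange_big /=; apply: eq_bigr => w _.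
  by rewrite -mulr_suml /xl.
have F2 : 0 <= \sum_w xl (om T w) (Q w).
  apply: le_trans (_ : \sum_w (om T w - Q w) <= _).
    by rewrite sumrB om_sum // Q1 subrr.
  apply: ler_sum => w _; apply: gibbs_term => //; first exact: om_ge0.
  move=> h; rewrite lt0r Q0 andbT; apply/eqP => q0; move: h.
  rewrite /outmarg big1 ?ltxx // => x _.
  by rewrite /T /tilt q0 !mul0r mulr0.
have F3 : forall x w, xl (PX x * T x w) (PX x * Q w) - PX x * T x w * ln (e x w)
                     = - (PX x * T x w * ln (Nf e Q x)).
  move=> x w; apply: (addIr (PX x * T x w * ln (Nf e Q x))).
  rewrite addNr xl_tilt //.
  - by rewrite /T /tilt !mulrA xl_self.
  - by move=> h; rewrite mulr_gt0 ?(pos_PX h) ?(QT x w h).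
rewrite /Lag /G.
have -> : MIn T = \sum_x \sum_w xl (PX x * T x w) (PX x * Q w) - \sum_w xl (om T w) (Q w).
  by rewrite -F1 opprB addrC subrK.
have -> : \sum_x PX x * ln (Nf e Q x) = \sum_x \sum_w PX x * T x w * ln (Nf e Q x).
  by apply: eq_bigr => x _; rewrite -mulr_suml -mulr_sumr (ker_sum hT) mulr1.
have -> : \sum_x \sum_w xl (PX x * T x w) (PX x * Q w) - \sum_w xl (om T w) (Q w) -
    \sum_x \sum_w PX x * T x w * ln (e x w) =
    \sum_x \sum_w (xl (PX x * T x w) (PX x * Q w) - PX x * T x w * ln (e x w))
     - \sum_w xl (om T w) (Q w).
  rewrite [RHS]addrC [LHS]addrAC [in RHS]addrC; congr (_ - _).
  by rewrite -sumrB; apply: eq_bigr => x _; rewrite sumrB.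
rewrite (eq_bigr _ (fun x _ => eq_bigr _ (fun w _ => F3 x w))).
rewrite -[X in _ <= X]subr0 lerB // le_eqVlt; apply/orP; left; apply/eqP.
rewrite -sumrN; apply: eq_bigr => x _; by rewrite sumrN.
Qed.
Lemma gap_ge0 e K : (forall x w, 0 < e x w) -> is_kernel K -> forall x w,
  0 <= xl (PX x * K x w) (PX x * tilt e (om K) x w)
       - (PX x * K x w - PX x * tilt e (om K) x w).
Proof.
move=> he hK x w; rewrite subr_ge0; apply: gibbs_term.
- by rewrite mulr_ge0 ?PX_ge0 ?(ker_ge0 hK).
- by rewrite mulr_ge0 ?PX_ge0 ?(ker_ge0 (tilt_ker he (om_dist hK))).
move=> h; rewrite mulr_gt0 ?(pos_PX h) // /tilt divr_gt0 ?mulr_gt0 ?(om_pos hK h) //.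
exact: (Nf_pos he (om_dist hK)).
Qed.

Lemma lag_geG e K : (forall x w, 0 < e x w) -> is_kernel K -> G e (om K) <= Lag e K.
Proof.
move=> he hK; rewrite (lag_decomp he hK) lerDl sumr_ge0 // => x _.
by rewrite sumr_ge0 // => w _; apply: gap_ge0.
Qed.

Lemma lag_minB e K : (forall x w, 0 < e x w) -> is_kernel K ->
  (forall K', is_kernel K' -> Lag e K <= Lag e K') ->
  forall x, 0 < PX x -> forall w, K x w = tilt e (om K) x w.
Proof.
move=> he hK hmin x px w.
have h1 : Lag e K <= G e (om K).
  apply: le_trans (hmin _ (tilt_ker he (om_dist hK))) _.
  exact: lag_tilt (om_dist hK).
move: h1; rewrite (lag_decomp he hK) gerDl => h1.
have h0 : \sum_x \sum_w (xl (PX x * K x w) (PX x * tilt e (om K) x w)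
       - (PX x * K x w - PX x * tilt e (om K) x w)) = 0.
  apply/eqP; rewrite eq_le h1 sumr_ge0 // => y _.
  by rewrite sumr_ge0 // => v _; apply: gap_ge0.
move: h0 => /eqP; rewrite psumr_eq0; last first.
  by move=> y _; rewrite sumr_ge0 // => v _; apply: gap_ge0.
move=> /allP /(_ x (mem_index_enum x)) /eqP.
move=> /eqP; rewrite psumr_eq0; last by move=> v _; apply: gap_ge0.
move=> /allP /(_ w (mem_index_enum w)); rewrite subr_eq0 => /eqP hx.
have := gibbs_eq _ _ _ hx.
have hq : 0 <= PX x * tilt e (om K) x w.
  by rewrite mulr_ge0 ?PX_ge0 ?(ker_ge0 (tilt_ker he (om_dist hK))).
have hc : 0 <= PX x * K x w by rewrite mulr_ge0 ?PX_ge0 ?(ker_ge0 hK).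
move=> /(_ hc hq) h.
have {}h : PX x * K x w = PX x * tilt e (om K) x w.
  apply: h => hh; rewrite mulr_gt0 ?(pos_PX hh) // /tilt divr_gt0 ?mulr_gt0 ?(om_pos hK hh) //.
  exact: (Nf_pos he (om_dist hK)).
exact: (mulfI (negbT (gt_eqF px)) h).
Qed.

Definition Qmix (Q : W -> R) (t : R) (w0 : W) := fun w => (1 - t) * Q w + t * (w == w0)%:R.

Lemma Qmix_dist Q t w0 : isdist Q -> 0 <= t <= 1 -> isdist (Qmix Q t w0).
Proof.
move=> [Q0 Q1] /andP[t0 t1]; split.
  by move=> w; rewrite /Qmix addr_ge0 ?mulr_ge0 ?subr_ge0.
rewrite /Qmix big_split /= -!mulr_sumr Q1 (bigD1 w0) //= eqxx big1 ?addr0.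
  by rewrite !mulr1 subrK.
by move=> w /negbTE ->.
Qed.

Lemma Nf_mix e Q t w0 x : Nf e (Qmix Q t w0) x = (1 - t) * Nf e Q x + t * e x w0.
Proof.
rewrite /Nf /Qmix; under eq_bigr do rewrite mulrDl.
rewrite big_split /=; congr (_ + _).
  by rewrite mulr_sumr; apply: eq_bigr => w _; rewrite mulrA.
rewrite (bigD1 w0) //= eqxx big1 ?addr0 ?mulr1 //.
by move=> w /negbTE ->; rewrite mulr0 mul0r.
Qed.

Lemma lag_minA e K : (forall x w, 0 < e x w) -> is_kernel K ->
  (forall K', is_kernel K' -> Lag e K <= Lag e K') ->
  forall w0, \sum_x PX x * e x w0 / Nf e (om K) x <= 1.
Proof.
move=> he hK hmin w0.
set N := Nf e (om K).
have hN : forall x, 0 < N x := Nf_pos he (om_dist hK).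
pose s := \sum_x PX x * ((e x w0 - N x) / N x).
pose C := \sum_x PX x * ((e x w0 - N x) / N x) ^+ 2.
have C0 : 0 <= C by rewrite sumr_ge0 // => x _; rewrite mulr_ge0 ?PX_ge0 ?sqr_ge0.
have key : forall t, 0 < t -> t < 1 -> s <= t / (1 - t) * C.
  move=> t t0 t1.
  have ht : 0 <= t <= 1 by rewrite !ltW.
  have hQt := Qmix_dist w0 (om_dist hK) ht.
  set Nt := Nf e (Qmix (om K) t w0).
  have hNt : forall x, 0 < Nt x := Nf_pos he hQt.
  have hG : G e (om K) <= G e (Qmix (om K) t w0).
    apply: le_trans (lag_geG he hK) _.
    apply: le_trans (hmin _ (tilt_ker he hQt)) _.
    exact: lag_tilt.
  have hs1 : \sum_x PX x * (t * ((e x w0 - N x) / Nt x)) <= 0.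
    move: hG; rewrite /G lerN2 -subr_ge0 -sumrB => hG.
    apply: le_trans (_ : \sum_x PX x * (ln (Nt x) - ln (N x)) <= 0).
      apply: ler_sum => x _; apply: ler_wpM2l; first exact: PX_ge0.
      have := lnle (divr_gt0 (hN x) (hNt x)).
      rewrite ln_div ?posrE // => hl.
      have -> : t * ((e x w0 - N x) / Nt x) = 1 - N x / Nt x.
        rewrite /Nt Nf_mix -/N; field; rewrite gt_eqF //.
        by have := hNt x; rewrite /Nt Nf_mix.
      lra.
    have e1 : \sum_x PX x * (ln (Nt x) - ln (N x)) = - \sum_x (PX x * ln (N x) - PX x * ln (Nt x)).
      by rewrite -sumrN; apply: eq_bigr => x _; rewrite mulrBr opprB.
    by rewrite e1 oppr_le0.
  have hs2 : \sum_x PX x * ((e x w0 - N x) / Nt x) <= 0.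
    move: hs1; under eq_bigr do rewrite mulrCA; rewrite -mulr_sumr.
    by rewrite pmulr_rle0.
  apply: le_trans (_ : \sum_x PX x * ((e x w0 - N x) / Nt x + t / (1 - t) * ((e x w0 - N x) / N x) ^+ 2) <= _).
    apply: ler_sum => x _; apply: ler_wpM2l; first exact: PX_ge0.
    rewrite /Nt Nf_mix -/N; apply: gen_bound => //.
  under eq_bigr do rewrite mulrDr.
  rewrite big_split /=; rewrite -[X in _ <= X]add0r; apply: lerD => //.
  rewrite /C mulr_sumr le_eqVlt; apply/orP; left; apply/eqP; apply: eq_bigr => x _.
  by rewrite mulrCA.
have s0 := small_pos C0 key.
have -> : \sum_x PX x * e x w0 / N x = s + 1.
  rewrite -PX_sum /s -big_split /=; apply: eq_bigr => x _.
  by field; rewrite gt_eqF.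
lra.
Qed.
Definition mixK (K1 K2 : X -> W -> R) (t : R) := fun x w => (1 - t) * K1 x w + t * K2 x w.

Lemma mix_ker K1 K2 t : is_kernel K1 -> is_kernel K2 -> 0 <= t <= 1 -> is_kernel (mixK K1 K2 t).
Proof.
move=> h1 h2 /andP[t0 t1] x; split.
  by move=> w; rewrite /mixK addr_ge0 ?mulr_ge0 ?subr_ge0 ?(ker_ge0 h1) ?(ker_ge0 h2).
by rewrite /mixK big_split /= -!mulr_sumr (ker_sum h1) (ker_sum h2) !mulr1 subrK.
Qed.

Lemma om_mix K1 K2 t w : om (mixK K1 K2 t) w = (1 - t) * om K1 w + t * om K2 w.
Proof.
rewrite /outmarg /mixK !mulr_sumr -big_split /=; apply: eq_bigr => x _; ring.
Qed.

Lemma EdS_mix K1 K2 t : EdS P dS (mixK K1 K2 t) = (1 - t) * EdS P dS K1 + t * EdS P dS K2.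
Proof.
rewrite /EdS !mulr_sumr -big_split /=; apply: eq_bigr => x _.
rewrite !mulr_sumr -big_split /=; apply: eq_bigr => w _; rewrite /mixK; ring.
Qed.

Lemma EdX_mix K1 K2 t : EdX P dX (mixK K1 K2 t) = (1 - t) * EdX P dX K1 + t * EdX P dX K2.
Proof.
rewrite /EdX !mulr_sumr -big_split /=; apply: eq_bigr => x _.
rewrite !mulr_sumr -big_split /=; apply: eq_bigr => w _; rewrite /mixK; ring.
Qed.

Lemma MIn_mix K1 K2 t : is_kernel K1 -> is_kernel K2 -> 0 <= t <= 1 ->
  MIn (mixK K1 K2 t) <= (1 - t) * MIn K1 + t * MIn K2.
Proof.
move=> h1 h2 ht; rewrite /MIn !mulr_sumr -big_split /=; apply: ler_sum => x _.
rewrite !mulr_sumr -big_split /=; apply: ler_sum => w _.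
have -> : PX x * mixK K1 K2 t x w = (1 - t) * (PX x * K1 x w) + t * (PX x * K2 x w).
  by rewrite /mixK; ring.
have -> : PX x * om (mixK K1 K2 t) w = (1 - t) * (PX x * om K1 w) + t * (PX x * om K2 w).
  by rewrite om_mix; ring.
apply: xl_convex => //.
- by rewrite mulr_ge0 ?PX_ge0 ?(ker_ge0 h1).
- by rewrite mulr_ge0 ?PX_ge0 ?(ker_ge0 h2).
- by rewrite mulr_ge0 ?PX_ge0 ?(om_ge0 h1).
- by rewrite mulr_ge0 ?PX_ge0 ?(om_ge0 h2).
- exact: pos_omP.
- exact: pos_omP.
Qed.

Lemma MI_mix K1 K2 t : is_kernel K1 -> is_kernel K2 -> 0 <= t <= 1 ->
  MI b P (mixK K1 K2 t) <= (1 - t) * MI b P K1 + t * MI b P K2.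
Proof.
move=> h1 h2 ht; rewrite !MI_eq mulrA [t * _]mulrA -mulrDl ler_pM2r ?invr_gt0 ?lnb_gt0 //.
exact: MIn_mix.
Qed.

Lemma MI_ge0 (K : X -> W -> R) : is_kernel K -> 0 <= MI b P K.
Proof. by move=> h; rewrite MI_eq divr_ge0 ?MIn_ge0 // ltW // lnb_gt0. Qed.

Local Notation Rf := (@RSX R S X Sh Xh b P dS dX).
Local Notation feas := (@feasible R S X Sh Xh P dS dX).


Lemma R_lb t u K : feas t u K -> Rf t u <= MI b P K.
Proof.
move=> hK; rewrite /RSX; apply: ge_inf; last by exists K.
by exists 0 => y [K' [hK' _] <-]; apply: MI_ge0.
Qed.

Lemma R_adh t u : (exists K, feas t u K) -> forall eps, 0 < eps ->
  exists K, feas t u K /\ MI b P K < Rf t u + eps.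
Proof.
move=> [K hK] eps e0; rewrite /RSX.
have hi : has_inf [set MI b P K | K in feas t u].
  split; first by exists (MI b P K); exists K.
  by exists 0 => y [K' [hK' _] <-]; apply: MI_ge0.
have [y [K' hK' <-] hy] := inf_adherent e0 hi.
by exists K'.
Qed.

Lemma R_convex p1 p2 q1 q2 m1 m2 t : 0 <= t <= 1 ->
  (exists K, feas p1 p2 K) -> (exists K, feas q1 q2 K) ->
  m1 = (1 - t) * p1 + t * q1 -> m2 = (1 - t) * p2 + t * q2 ->
  Rf m1 m2 <= (1 - t) * Rf p1 p2 + t * Rf q1 q2.
Proof.
move=> /andP[t0 t1] hp hq e1 e2; apply/ler_addgt0Pr => eps e0.
have [K1 [f1 l1]] := R_adh hp e0.
have [K2 [f2 l2]] := R_adh hq e0.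
have ht : 0 <= t <= 1 by rewrite t0 t1.
have t1' : 0 <= 1 - t by rewrite subr_ge0.
case: f1 => k1 [s1 x1]; case: f2 => k2 [s2 x2].
have fm : feas m1 m2 (mixK K1 K2 t).
  split; first exact: mix_ker.
  rewrite EdS_mix EdX_mix e1 e2; split.
    by apply: lerD; apply: ler_wpM2l.
  by apply: lerD; apply: ler_wpM2l.
apply: le_trans (R_lb fm) _.
apply: le_trans (MI_mix k1 k2 ht) _.
apply: le_trans (_ : (1 - t) * (Rf p1 p2 + eps) + t * (Rf q1 q2 + eps) <= _).
  by apply: lerD; apply: ler_wpM2l => //; apply: ltW.
rewrite le_eqVlt; apply/orP; left; apply/eqP; ring.
Qed.

Lemma R_mono t u t' u' : (exists K, feas t u K) -> t <= t' -> u <= u' -> Rf t' u' <= Rf t u.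
Proof.
move=> hp ht hu; apply/ler_addgt0Pr => eps e0.
have [K [[k [s x]] l]] := R_adh hp e0.
apply: le_trans (ltW l); apply: R_lb; split => //; split.
  exact: le_trans ht.
exact: le_trans hu.
Qed.

Lemma fin_argmin (T : finType) (f : T -> R) (t0 : T) : exists z, forall z', f z <= f z'.
Proof.
by case: (@arg_minP _ R T t0 predT f isT) => z _ hz; exists z => z'; apply: hz.
Qed.

Lemma inf_range_min (T : finType) (f : T -> R) z : (forall z', f z <= f z') -> inf (range f) = f z.
Proof.
move=> hz; apply/eqP; rewrite eq_le; apply/andP; split.
  by apply: ge_inf; [exists (f z) => _ [y _ <-]; apply: hz|exists z].
by apply: lb_le_inf; [exists (f z); exists z|move=> _ [y _ <-]; apply: hz].
Qed.

Lemma Dadm_feas (w1 : W) p : Dadm P dS dX p -> exists K, feas p.1 p.2 K.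
Proof.
move=> [h1 h2].
have hz : forall x, exists z, forall z', dSbar P dS x z <= dSbar P dS x z'.
  by move=> x; apply: fin_argmin w1.1.
have hy : forall x, exists y, forall y', dX x y <= dX x y'.
  by move=> x; apply: fin_argmin w1.2.
pose zs x := xget w1.1 (fun z => forall z', dSbar P dS x z <= dSbar P dS x z').
pose ys x := xget w1.2 (fun y => forall y', dX x y <= dX x y').
have hzs : forall x z', dSbar P dS x (zs x) <= dSbar P dS x z'.
  by move=> x; case: (hz x) => z hz'; apply: (@xgetI _ w1.1 (fun z0 => forall z', dSbar P dS x z0 <= dSbar P dS x z') z hz').
have hys : forall x y', dX x (ys x) <= dX x y'.
  by move=> x; case: (hy x) => z hz'; apply: (@xgetI _ w1.2 (fun z0 => forall z', dX x z0 <= dX x z') z hz').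
pose K0 := fun x (w : W) => ((w == (zs x, ys x))%:R : R).
have hK0 : is_kernel K0.
  move=> x; split; first by move=> w; rewrite /K0 ler0n.
  by rewrite /K0 (bigD1 (zs x, ys x)) //= eqxx big1 ?addr0 // => w /negbTE ->.
exists K0; split => //; split.
- apply: le_trans h1; rewrite /EdS le_eqVlt; apply/orP; left; apply/eqP.
  apply: eq_bigr => x _; rewrite (bigD1 (zs x, ys x)) //= big1.
    by rewrite /K0 eqxx mulr1 addr0 (inf_range_min (hzs x)).
  by move=> w /negbTE hw; rewrite /K0 hw mulr0 mul0r.
- apply: le_trans h2; rewrite /EdX le_eqVlt; apply/orP; left; apply/eqP.
  apply: eq_bigr => x _; rewrite (bigD1 (zs x, ys x)) //= big1.
    by rewrite /K0 eqxx mulr1 addr0 (inf_range_min (hys x)).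
  by move=> w /negbTE hw; rewrite /K0 hw mulr0 mul0r.
Qed.
Lemma ler_eps_c (x y c : R) : 0 <= c -> (forall e, 0 < e -> x <= y + e * c) -> x <= y.
Proof.
move=> c0 h; apply/ler_addgt0Pr => e e0.
have c1 : 0 < c + 1 by rewrite ltr_wpDl.
apply: le_trans (h (e / (c + 1)) (divr_gt0 e0 c1)) _.
rewrite lerD2l -mulrA ler_piMr ?(ltW e0) // ler_pdivrMl // mulr1 lerDl //.
Qed.

Lemma subgrad (ds dx r mu a : R) (K : X -> W -> R) :
  0 < r ->
  (forall p1 p2, `|p1 - ds| < r -> `|p2 - dx| < r -> exists K, feas p1 p2 K) ->
  feas ds dx K -> MI b P K = Rf ds dx ->
  (forall h, `|h| < r -> Rf ds dx + mu * h <= Rf (ds + h) dx) ->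
  (forall eps, 0 < eps -> exists2 del, 0 < del & forall t, t != 0 -> `|t| < del ->
      `|(Rf ds (t + dx) - Rf ds dx) / t + a| < eps) ->
  forall K', is_kernel K' ->
  Rf ds dx + mu * (EdS P dS K' - ds) - a * (EdX P dX K' - dx) <= MI b P K'.
Proof.
move=> r0 hball hK hKm Hs Hx K' hK'.
set hs := EdS P dS K' - ds; set hx := EdX P dX K' - dx; set R0 := Rf ds dx.
apply: (@ler_eps_c _ _ `|hx|) => // eps e0.
have [del del0 hdel] := Hx eps e0.
pose rho := Num.min (2^-1) (Num.min r del) / 2.
have rho0 : 0 < rho by rewrite divr_gt0 // lt_min invr_gt0 ltr0n /= lt_min r0 del0.
have rho_lt : rho < Num.min (2^-1) (Num.min r del).
  by rewrite /rho ltr_pdivrMr // ltr_pMr ?ltr1n // lt_min invr_gt0 ltr0n /= lt_min r0 del0.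
have [rho_h rho_rd] : rho < 2^-1 /\ rho < Num.min r del.
  by move: rho_lt; rewrite lt_min => /andP[].
have [rho_r rho_d] : rho < r /\ rho < del by move: rho_rd; rewrite lt_min => /andP[].
set Dn := `|hs| + `|hx| + 1.
have Dn0 : 0 < Dn by rewrite /Dn ltr_wpDl // addr_ge0.
pose th := rho / Dn.
have th0 : 0 < th by rewrite divr_gt0.
have th_rho : forall v : R, `|v| <= `|hs| + `|hx| -> th * `|v| <= rho.
  move=> v hv; rewrite /th mulrAC ler_pdivrMr // ler_wpM2l ?(ltW rho0) //.
  apply: (le_trans hv); by rewrite /Dn lerDl.
have th1 : th < 1.
  rewrite /th ltr_pdivrMr // mul1r; apply: (lt_le_trans rho_h).
  apply: (le_trans _ (_ : 1 <= Dn)); first by rewrite invf_le1 // ler1n.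
  by rewrite /Dn lerDr addr_ge0.
have ths : th * `|hs| <= rho by apply: th_rho; rewrite lerDl.
have thx : th * `|hx| <= rho by apply: th_rho; rewrite lerDr.
have thI : 0 <= th <= 1 by rewrite !ltW.
case: (hK) => k [ks kx].
have t1p : 0 <= 1 - th by rewrite subr_ge0 ltW.
have fm : feas (ds + th * hs) (dx + th * hx) (mixK K K' th).
  split; first exact: mix_ker.
  rewrite EdS_mix EdX_mix /hs /hx; split.
    have := ler_wpM2l t1p ks; lra.
  have := ler_wpM2l t1p kx; lra.
have F1 : Rf (ds + th * hs) (dx + th * hx) <= (1 - th) * R0 + th * MI b P K'.
  apply: (le_trans (R_lb fm)); apply: (le_trans (MI_mix k hK' thI)).
  by rewrite hKm.
have F2 : Rf ds (dx - th * hx) <= R0 + a * (th * hx) + eps * (th * `|hx|).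
  have [hx0|hx0] := eqVneq hx 0.
    by rewrite hx0 normr0 !mulr0 subr0 !addr0.
  set t := - (th * hx).
  have t0 : t != 0 by rewrite oppr_eq0 mulf_eq0 negb_or gt_eqF.
  have tl : `|t| < del.
    by rewrite normrN normrM gtr0_norm // (le_lt_trans thx rho_d).
  have := hdel t t0 tl.
  set q := (Rf ds (t + dx) - Rf ds dx) / t => hq.
  have e1 : Rf ds (dx - th * hx) = R0 + q * t.
    rewrite /q divfK // /t (addrC _ dx) /R0; ring.
  rewrite e1.
  have : q * t <= - a * t + `|q + a| * `|t|.
    have -> : q * t = - a * t + (q + a) * t by ring.
    by rewrite lerD2l -normrM ler_norm.
  have : `|q + a| * `|t| <= eps * `|t| by rewrite ler_wpM2r // ltW.
  rewrite /t normrN normrM (gtr0_norm th0).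
  move=> h1 h2; lra.
have F3 : Rf (ds + th * hs / 2) dx <= (1 - 2^-1) * Rf (ds + th * hs) (dx + th * hx) + 2^-1 * Rf ds (dx - th * hx).
  apply: R_convex.
  - by rewrite invr_ge0 ler0n /= invf_le1 // ler1n.
  - by exists (mixK K K' th).
  - apply: hball; first by rewrite subrr normr0.
    by rewrite addrAC subrr add0r normrN normrM gtr0_norm // (le_lt_trans thx rho_r).
  - by field.
  - by field.
have F4 : R0 + mu * (th * hs / 2) <= Rf (ds + th * hs / 2) dx.
  apply: Hs.
  have -> : `|th * hs / 2| = th * `|hs| / 2.
    by rewrite normf_div normrM (gtr0_norm th0) (ger0_norm (ler0n _ 2)).
  rewrite ltr_pdivrMr //.
  apply: (le_lt_trans ths); apply: (lt_le_trans rho_r); rewrite ler_pMr // ler1n //.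
have key : th / 2 * (R0 + mu * hs - a * hx - (MI b P K' + eps * `|hx|)) <= 0.
  have -> : th / 2 * (R0 + mu * hs - a * hx - (MI b P K' + eps * `|hx|)) =
     (R0 + mu * (th * hs / 2)) - ((1 - 2^-1) * ((1 - th) * R0 + th * MI b P K')
       + 2^-1 * (R0 + a * (th * hx) + eps * (th * `|hx|))) by field.
  rewrite subr_le0; apply: (le_trans F4); apply: (le_trans F3).
  apply: lerD; apply: ler_wpM2l => //.
  - by rewrite subr_ge0 invf_le1 // ler1n.
have th2 : 0 < th / 2 by rewrite divr_gt0.
move: key; rewrite pmulr_rle0 // => key; lra.
Qed.
Definition ef (mu a : R) := fun x (w : W) => b `^ (mu * dSbar P dS x w.1 - a * dX x w.2).

Lemma b_gt0 : 0 < b. Proof. exact: lt_trans hb. Qed.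

Lemma ef_gt0 mu a : forall x w, 0 < ef mu a x w.
Proof. by move=> x w; apply: powR_gt0; exact: b_gt0. Qed.

Lemma Lag_eq mu a K : Lag (ef mu a) K =
  ln b * (MI b P K - mu * EdS P dS K + a * EdX P dX K).
Proof.
have lb0 : ln b != 0 by rewrite gt_eqF // lnb_gt0.
have e1 : \sum_x \sum_w PX x * K x w * ln (ef mu a x w) = ln b * (mu * EdS P dS K - a * EdX P dX K).
  rewrite /EdS /EdX mulrBr !mulr_sumr -sumrB; apply: eq_bigr => x _.
  rewrite ?mulr_sumr -sumrB; apply: eq_bigr => w _; rewrite /ef ln_powR; ring.
have e2 : MIn K = ln b * MI b P K by rewrite MI_eq mulrC divfK.
rewrite /Lag e1 e2; ring.
Qed.
Lemma lag_from_sub (ds dx mu a : R) K : mu <= 0 -> 0 <= a -> feas ds dx K ->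
  MI b P K = Rf ds dx ->
  (forall K', is_kernel K' ->
     Rf ds dx + mu * (EdS P dS K' - ds) - a * (EdX P dX K' - dx) <= MI b P K') ->
  forall K', is_kernel K' -> Lag (ef mu a) K <= Lag (ef mu a) K'.
Proof.
move=> mu0 a0 [k [ks kx]] hm hsub K' hK'.
rewrite !Lag_eq; apply: ler_wpM2l; first exact: ltW lnb_gt0.
have := hsub K' hK'.
have h1 : mu * ds <= mu * EdS P dS K by rewrite ler_wnM2l.
have h2 : a * EdX P dX K <= a * dx by rewrite ler_wpM2l.
rewrite hm; lra.
Qed.

Definition Hfin (a : R) (K : X -> W -> R) :=
  forall w0 : W, \sum_x PX x * ef 0 a x w0 / Nf (ef 0 a) (om K) x <= 1.

Lemma Hfin_smooth (a : R) K : is_kernel K ->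
  (forall K', is_kernel K' -> Lag (ef 0 a) K <= Lag (ef 0 a) K') -> Hfin a K.
Proof. by move=> hK hmin w0; apply: lag_minA => //; exact: ef_gt0. Qed.

Lemma ef_split mu a x w : ef mu a x w = b `^ (mu * dSbar P dS x w.1) * ef 0 a x w.
Proof.
rewrite /ef -powRD; last by apply/implyP => _; rewrite gt_eqF // b_gt0.
by congr (_ `^ _); ring.
Qed.

Lemma Hfin_kink (al be a : R) K : is_kernel K -> al != be ->
  (forall K', is_kernel K' -> Lag (ef al a) K <= Lag (ef al a) K') ->
  (forall K', is_kernel K' -> Lag (ef be a) K <= Lag (ef be a) K') -> Hfin a K.
Proof.
move=> hK nab hA hB.
have hKA := lag_minB (ef_gt0 al a) hK hA.
have hKB := lag_minB (ef_gt0 be a) hK hB.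
have [ws hws] : exists ws, 0 < om K ws.
  apply: contrapT => hn; have : \sum_w om K w <= 0.
    by rewrite sumr_le0 // => w _; rewrite leNgt; apply/negP => hw; apply: hn; exists w.
  by rewrite om_sum // ler10.
have lb0 : 0 < ln b := lnb_gt0.
have hNA := Nf_pos (ef_gt0 al a) (om_dist hK).
have hNB := Nf_pos (ef_gt0 be a) (om_dist hK).
pose c x := dSbar P dS x ws.1.
have C0 : forall x, 0 < PX x -> forall w, 0 < om K w ->
    (be - al) * dSbar P dS x w.1 * ln b = ln (Nf (ef be a) (om K) x) - ln (Nf (ef al a) (om K) x).
  move=> x px w hw.
  have := hKA x px w; rewrite (hKB x px w) /tilt => e.
  have e2 : ef be a x w / Nf (ef be a) (om K) x = ef al a x w / Nf (ef al a) (om K) x.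
    by apply: (mulfI (negbT (gt_eqF hw))); rewrite !mulrA.
  have := congr1 (@ln R) e2; rewrite !ln_div ?posrE ?ef_gt0 // /ef !ln_powR => e3.
  lra.
have C1 : forall x, 0 < PX x -> forall w, 0 < om K w -> dSbar P dS x w.1 = c x.
  move=> x px w hw; have := C0 x px w hw; rewrite -(C0 x px ws hws) => e.
  have : (be - al) * ln b * (dSbar P dS x w.1 - c x) = 0 by rewrite /c; lra.
  move/eqP; rewrite !mulf_eq0 subr_eq0 (gt_eqF lb0) orbF eq_sym (negbTE nab) /=.
  by rewrite subr_eq0 => /eqP.
have C2 : forall x, 0 < PX x ->
    Nf (ef be a) (om K) x = b `^ (be * c x) * Nf (ef 0 a) (om K) x.
  move=> x px; rewrite /Nf mulr_sumr; apply: eq_bigr => w _.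
  have [h0|hw] := eqVneq (om K w) 0; first by rewrite h0 !mul0r mulr0.
  have hw' : 0 < om K w by rewrite lt0r hw om_ge0.
  by rewrite ef_split (C1 x px w hw'); ring.
pose w0z := ws.1.
move=> w0.
have e0 : forall x, ef 0 a x w0 = ef 0 a x (w0z, w0.2).
  by move=> x; rewrite /ef !mul0r.
apply: le_trans (lag_minA (ef_gt0 be a) hK hB (w0z, w0.2)).
rewrite le_eqVlt; apply/orP; left; apply/eqP; apply: eq_bigr => x _.
have [px0|px] := eqVneq (PX x) 0; first by rewrite px0 !mul0r.
have pxp : 0 < PX x by rewrite lt0r px PX_ge0.
rewrite e0 (C2 x pxp) (ef_split be a x (w0z, w0.2)) /= -/(c x).
have hb0 : 0 < b `^ (be * c x) := powR_gt0 _ b_gt0.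
have hN0 := Nf_pos (ef_gt0 0 a) (om_dist hK) x.
by field; rewrite !gt_eqF.
Qed.
Lemma Hfin0 K : is_kernel K -> Hfin 0 K.
Proof.
move=> hK w0.
have e1 : forall x w, ef 0 0 x w = 1 by move=> x w; rewrite /ef !mul0r subr0 powRr0.
have e2 : forall x, Nf (ef 0 0) (om K) x = 1.
  by move=> x; rewrite /Nf; under eq_bigr do rewrite e1 mulr1; rewrite om_sum.
under eq_bigr do rewrite e1 e2 mulr1 divr1.
by rewrite PX_sum.
Qed.

Lemma final_bound (ds dx a gamma eps : R) K (M : nat) (E : X -> 'I_M -> R) (D : 'I_M -> W -> R) :
  is_kernel K -> 0 <= a ->
  lambda_s b P dS dX ds dx = 0 -> lambda_x b P dS dX ds dx = a ->
  Hfin a K -> is_code P dS dX E D ds dx eps ->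
  tail_prob b P dS dX K ds dx M gamma - expb b (- gamma) <= eps.
Proof.
move=> hK a0 hls hlx hH [hE [hD hex]].
have b0 := b_gt0.
have lb0 : 0 < ln b := lnb_gt0.
have x0 : X.
  case: (pickP (@predT X)) => [x _ //|h0].
  exfalso; have := PX_sum; rewrite big_pred0 // => /eqP; rewrite eq_sym oner_eq0.
  done.
have M1 : (1 <= M)%N.
  case: M E hE D hD hex => [|M'] E' hE' D' hD' hex' //.
  by have := ker_sum hE' x0; rewrite big_ord0 => /eqP; rewrite eq_sym oner_eq0.
have M0 : 0 < M%:R :> R by rewrite ltr0n.
set N0 := Nf (ef 0 a) (om K).
have hN0 : forall x, 0 < N0 x := Nf_pos (ef_gt0 0 a) (om_dist hK).
set V := fun x => b `^ (a * dx) * N0 x.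
have hV : forall x, 0 < V x by move=> x; rewrite /V mulr_gt0 // powR_gt0.
have jXe : forall x, jX b P dS dX K ds dx x = - logb b (V x).
  move=> x; rewrite /jX hls hlx; congr (- logb b _).
  rewrite /V /N0 /Nf mulr_sumr; apply: eq_bigr => w _.
  rewrite /expb /ef !mul0r.
  have -> : 0 + a * dx - 0 - a * dX x w.2 = a * dx + (0 - a * dX x w.2) by ring.
  rewrite powRD; last by apply/implyP => _; rewrite gt_eqF.
  ring.
set B := b `^ (- gamma) / M%:R.
have hB : 0 < B by rewrite divr_gt0 // powR_gt0.
set ind := fun x => (if gamma <= jX b P dS dX K ds dx x - logb b M%:R then 1 else 0 : R).
have ind_le : forall x, ind x <= B / V x.
  move=> x; rewrite /ind; case: ifP => h; last by rewrite divr_ge0 // ?ltW.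
  move: h; rewrite jXe /logb => h.
  have h1 : ln (V x * M%:R) <= ln (b `^ (- gamma)).
    rewrite ln_powR lnM ?posrE //.
    have := ler_wpM2r (ltW lb0) h.
    by rewrite mulrBl !mulNr !divfK ?gt_eqF //; lra.
  rewrite ler_ln ?posrE ?mulr_gt0 ?powR_gt0 // in h1.
  by rewrite /B ler_pdivlMr // mul1r ler_pdivlMr // mulrC.
have ind_ge0 : forall x, 0 <= ind x by move=> x; rewrite /ind; case: ifP.
have ind_le1 : forall x, ind x <= 1 by move=> x; rewrite /ind; case: ifP.
pose f x (w : W) := B * (ef 0 a x w / N0 x).
have f0 : forall x w, 0 <= f x w.
  move=> x w; rewrite /f; apply: mulr_ge0; first exact: ltW.
  by apply: divr_ge0; apply: ltW; [exact: ef_gt0|exact: hN0].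
pose bad (s : S) x (w : W) := (if (dS s w.1 > ds) || (dX x w.2 > dx) then 1 else 0 : R).
have termwise : forall s x w, ind x <= bad s x w + f x w.
  move=> s x w; rewrite /bad; case: ifP => hb'.
    by apply: (le_trans (ind_le1 x)); rewrite lerDl.
  rewrite add0r; apply: (le_trans (ind_le x)).
  move: hb'; move/negbT; rewrite negb_or -!leNgt => /andP[_ hdx].
  rewrite /f /B; apply: ler_wpM2l; first exact: ltW.
  rewrite /V invfM; apply: ler_wpM2r; first by rewrite invr_ge0 ltW.
  rewrite /ef !mul0r sub0r -powRN; apply: ler_powR; first exact: ltW.
  by rewrite lerN2 ler_wpM2l.
have PEDge : forall s x u w, 0 <= P (s, x) * E x u * D u w.
  by move=> s x u w; rewrite !mulr_ge0 ?(ker_ge0 hE) ?(ker_ge0 hD) //; case: hP.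
have step1 : tail_prob b P dS dX K ds dx M gamma =
    \sum_s \sum_x \sum_u \sum_w P (s, x) * E x u * D u w * ind x.
  rewrite /tail_prob [RHS]exchange_big /=; apply: eq_bigr => x _.
  rewrite /Defs.PX mulr_suml; apply: eq_bigr => s _; rewrite -/(ind x).
  have -> : P (s, x) * ind x = P (s, x) * (\sum_u E x u * \sum_w D u w) * ind x.
    by rewrite (eq_bigr (fun u => E x u)) ?(ker_sum hE) ?mulr1 // => u _; rewrite (ker_sum hD) mulr1.
  rewrite mulr_sumr mulr_suml; apply: eq_bigr => u _.
  rewrite mulr_sumr mulr_sumr mulr_suml; apply: eq_bigr => w _; ring.
have step2 : tail_prob b P dS dX K ds dx M gamma <=
    excess_prob P dS dX E D ds dx + \sum_s \sum_x \sum_u \sum_w P (s, x) * E x u * D u w * f x w.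
  rewrite step1 /excess_prob -big_split /=; apply: ler_sum => s _.
  rewrite -big_split /=; apply: ler_sum => x _.
  rewrite -big_split /=; apply: ler_sum => u _.
  rewrite -big_split /=; apply: ler_sum => w _.
  by rewrite -mulrDr; apply: ler_wpM2l; [exact: PEDge|exact: termwise].
have step3 : \sum_s \sum_x \sum_u \sum_w P (s, x) * E x u * D u w * f x w <= B * M%:R.
  have -> : \sum_s \sum_x \sum_u \sum_w P (s, x) * E x u * D u w * f x w =
      \sum_x \sum_u \sum_w PX x * E x u * D u w * f x w.
    rewrite exchange_big /=; apply: eq_bigr => x _.
    rewrite /Defs.PX; under [RHS]eq_bigr do under eq_bigr do rewrite !mulr_suml.
    under [RHS]eq_bigr do rewrite exchange_big /=.
    rewrite exchange_big /=; apply: eq_bigr => s _; rewrite exchange_big /=.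
    done.
  apply: (@le_trans _ _ (\sum_x \sum_u \sum_w PX x * D u w * f x w)).
    apply: ler_sum => x _; apply: ler_sum => u _; apply: ler_sum => w _.
    have c0 : 0 <= PX x * D u w * f x w.
      by apply: mulr_ge0; [apply: mulr_ge0; [exact: PX_ge0|exact: (ker_ge0 hD)]|exact: f0].
    have -> : PX x * E x u * D u w * f x w = (PX x * D u w * f x w) * E x u by ring.
    by rewrite ler_piMr // (ker_le1 hE).
  rewrite exchange_big /=.
  have -> : B * M%:R = \sum_(u < M) \sum_w D u w * B.
    rewrite (eq_bigr (fun _ => B)); last by move=> u _; rewrite -mulr_suml (ker_sum hD) mul1r.
    by rewrite sumr_const card_ord mulr_natr.
  apply: ler_sum => u _; rewrite exchange_big /=; apply: ler_sum => w _.
  rewrite (eq_bigr (fun x => D u w * B * (PX x * ef 0 a x w / N0 x))); last first.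
    by move=> x _; rewrite /f; ring.
  rewrite -mulr_sumr.
  have hD0 : 0 <= D u w * B by apply: mulr_ge0; [exact: (ker_ge0 hD)|exact: ltW].
  have hS := hH w.
  by rewrite ler_piMr.
have eB : B * M%:R = expb b (- gamma) by rewrite /B /expb divfK ?gt_eqF.
lra.
Qed.
Lemma main_in ds dx (K : X -> W -> R) (M : nat) (E : X -> 'I_M -> R) (D : 'I_M -> W -> R) eps :
  Din b P dS dX (ds, dx) -> lambda_s b P dS dX ds dx = 0 ->
  minimizer b P dS dX ds dx K -> is_code P dS dX E D ds dx eps ->
  forall gamma, tail_prob b P dS dX K ds dx M gamma - expb b (- gamma) <= eps.
Proof.
move=> hDin hls [hKf hKm] hcode gamma.
have hK : is_kernel K := hKf.1.
have x0 : X.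
  case: (pickP (@predT X)) => [x _ //|h0].
  exfalso; have := PX_sum; rewrite big_pred0 // => /eqP; rewrite eq_sym oner_eq0.
  done.
have w1 : W.
  case: (pickP (@predT W)) => [w _ //|h0].
  by exfalso; have := ker_sum hK x0; rewrite big_pred0 // => /eqP; rewrite eq_sym oner_eq0.
have [r r0 hr] : exists2 r : R, 0 < r & forall p1 p2, `|p1 - ds| < r -> `|p2 - dx| < r ->
    Dadm P dS dX (p1, p2).
  case: hDin => [h|[h|[h|h]]]; have [e e0 he] := int_ball h; exists e => // p1 p2 h1 h2.
  - by case: (he (p1, p2) h1 h2) => hh _.
  - by case: (he (p1, p2) h1 h2) => hh _ _.
  - by case: (he (p1, p2) h1 h2) => hh _ _.
  - by case: (he (p1, p2) h1 h2) => hh _ _.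
have hball : forall p1 p2, `|p1 - ds| < r -> `|p2 - dx| < r -> exists K, feas p1 p2 K.
  by move=> p1 p2 h1 h2; exact: (Dadm_feas w1 (hr p1 p2 h1 h2)).
have hd : exists K, feas ds dx K by exists K.
case: (pselect (exists l : R, (fun h => h^-1 *: (RSX b P dS dX ds (h + dx) - RSX b P dS dX ds dx)) @ 0^' --> l))
   => [[l hl]|nl]; last first.
  have hlx : lambda_x b P dS dX ds dx = 0.
    rewrite /lambda_x /derive1 /lim /lim_in getPN ?oppr0 // => l hl; apply: nl; by exists l.
  exact: (final_bound gamma hK (lexx 0) hls hlx (Hfin0 hK) hcode).
set a := - l.
have hlx : lambda_x b P dS dX ds dx = a.
  by rewrite /lambda_x /derive1 (cvg_lim (@Rhausdorff R) hl).
have Hx : forall eps, 0 < eps -> exists2 del, 0 < del & forall t, t != 0 -> `|t| < del ->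
      `|(Rf ds (t + dx) - Rf ds dx) / t + a| < eps.
  move=> e e0; move/cvgrPdist_lt: hl => /(_ e e0) /near0' [del del0 hdel].
  exists del => // t t0 tl; have := hdel t t0 tl.
  by rewrite distrC /a mulrC.
have a0 : 0 <= a.
  apply/ler_addgt0Pr => e e0.
  have [del del0 hdel] := Hx e e0.
  pose t := Num.min del r / 2.
  have t0 : 0 < t by rewrite divr_gt0 // lt_min del0 r0.
  have tm : t < Num.min del r by rewrite /t ltr_pdivrMr // ltr_pMr ?ltr1n // lt_min del0 r0.
  have [tdel tr] : t < del /\ t < r by move: tm; rewrite lt_min => /andP[].
  have tn : t != 0 by rewrite gt_eqF.
  have tl : `|t| < del by rewrite gtr0_norm.
  have := hdel t tn tl.
  have hq : (Rf ds (t + dx) - Rf ds dx) / t <= 0.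
    rewrite pmulr_lle0 ?invr_gt0 // subr_le0; apply: R_mono hd _ _ => //.
    by rewrite lerDr ltW.
  move: hq; set q := (Rf ds (t + dx) - Rf ds dx) / t => hq.
  rewrite ltr_norml => /andP[h1 _]; lra.
pose g := fun h => Rf (h + ds) dx.
have conv : forall u v l, -r < u < r -> -r < v < r -> 0 <= l <= 1 ->
    g (l * u + (1 - l) * v) <= l * g u + (1 - l) * g v.
  move=> u v l' hu hv /andP[l0 l1].
  have fu : exists K, feas (u + ds) dx K by apply: hball; rewrite ?addrK ?subrr ?normr0 // ltr_norml.
  have fv : exists K, feas (v + ds) dx K by apply: hball; rewrite ?addrK ?subrr ?normr0 // ltr_norml.
  have := R_convex (t := 1 - l') (m1 := l' * u + (1 - l') * v + ds) (m2 := dx) _ fu fv.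
  have e1 : 1 - (1 - l') = l' by ring.
  rewrite e1; apply.
  - by apply/andP; split; lra.
  - by ring.
  - by ring.
have mono : forall h, 0 < h < r -> g h <= g 0.
  move=> h /andP[h0 hr']; apply: R_mono.
  - by rewrite add0r.
  - by rewrite lerD2r ltW.
  - done.
have [al [be [ab be0 hbe hal hcvg]]] := slope_ab r0 conv mono.
have g0 : g 0 = Rf ds dx by rewrite /g add0r.
have Hs : forall mu, al <= mu -> mu <= be -> forall h, `|h| < r -> Rf ds dx + mu * h <= Rf (ds + h) dx.
  move=> mu h1 h2 h hh; have /andP[hlo hhi] : -r < h < r by rewrite -ltr_norml.
  rewrite -g0 (addrC ds) -/(g h) -lerBrDl.
  have [hn|hp|->] := ltgtP h 0.
  - apply: (le_trans _ (hal h _)); last by rewrite hlo hn.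
    by rewrite ler_wnM2r // ltW.
  - apply: (le_trans _ (hbe h _)); last by rewrite hp hhi.
    by rewrite ler_wpM2r // ltW.
  - by rewrite mulr0 subrr.
have hsub : forall mu, al <= mu -> mu <= be -> forall K', is_kernel K' ->
    Rf ds dx + mu * (EdS P dS K' - ds) - a * (EdX P dX K' - dx) <= MI b P K'.
  move=> mu h1 h2; exact: (subgrad r0 hball hKf hKm (Hs mu h1 h2) Hx).
have hlag : forall mu, al <= mu -> mu <= be -> forall K', is_kernel K' ->
    Lag (ef mu a) K <= Lag (ef mu a) K'.
  move=> mu h1 h2.
  exact: (@lag_from_sub ds dx mu a K (le_trans h2 be0) a0 hKf hKm (hsub mu h1 h2)).
have HF : Hfin a K.
  have [eab|nab] := eqVneq al be.
  - have al0 : al = 0.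
      have hd1 : derive1 (fun t => RSX b P dS dX t dx) ds = al.
        rewrite /derive1.
        have -> : (fun h => h^-1 *: ((fun t => RSX b P dS dX t dx) (h + ds) - (fun t => RSX b P dS dX t dx) ds)) = qq g.
          by apply: funext => h; rewrite /qq /g add0r mulrC.
        exact: (cvg_lim (@Rhausdorff R) (hcvg eab)).
      by move: hls; rewrite /lambda_s hd1 => /eqP; rewrite oppr_eq0 => /eqP.
    apply: Hfin_smooth => //; apply: hlag; by rewrite ?al0 -?eab ?al0.
  - by apply: (Hfin_kink hK nab); apply: hlag.
exact: (final_bound gamma hK a0 hls hlx HF hcode).
Qed.
End Main.

Unset Implicit Arguments.

Theorem proposition2 (R : realType) (S X Sh Xh : finType) (b : R)
  (P : S * X -> R) (dS : S -> Sh -> R) (dX : X -> Xh -> R)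
  (ds dx : R) (K : X -> Sh * Xh -> R)
  (M : nat) (E : X -> 'I_M -> R) (D : 'I_M -> Sh * Xh -> R) (eps : R) :
  1 < b ->
  is_dist P ->
  (forall s z, 0 <= dS s z) -> (forall x y, 0 <= dX x y) ->
  Din b P dS dX (ds, dx) ->
  lambda_s b P dS dX ds dx = 0 ->
  minimizer b P dS dX ds dx K ->
  is_code P dS dX E D ds dx eps ->
  forall gamma : R, 0 <= gamma ->
    tail_prob b P dS dX K ds dx M gamma - expb b (- gamma) <= eps.
Proof.
move=> hb hP _ _ hDin hls hmin hcode gamma _.
exact: (main_in hb hP hDin hls hmin hcode gamma).
Qed.
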